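(* Let $X$ be a non-negative absolutely continuous random variable with PDF $f$, let $r>0$ and let $X_{e,r}$ be the escort random variable of order $r$, with PDF $f_{e,r}(x)=\frac{f^r(x)}{\int_0^\infty f^r(t)\,dt}$, $x>0$. Then, for $0<\alpha<\infty$, $\alpha\neq1$, $\beta>0$, with $r\ne1$ and $\alpha r\ne 1$, $$R^\alpha_\beta(X_{e,r})=\frac{1-\alpha r}{(1-\alpha)(1-r)}\cdot\frac{R^{\alpha r}_\beta(X)}{R^r_{\alpha\beta-\alpha+1}(X)}.$$
   Context: For a non-negative absolutely continuous random variable $Z$ with PDF $h$, $0<a<\infty$, $a\ne1$, $b>0$, the Rényi information generating function is $R^a_b(Z)=\frac{1}{1-a}\left(\int_0^\infty h^a(x)\,dx\right)^{b-1}$. All integrals are assumed to exist and be finite (and nonzero where they appear in denominators). *)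

(* Defs.v *)
From HB Require Import structures.
From mathcomp Require Import all_boot all_order all_algebra.
From mathcomp Require Import all_classical all_reals all_analysis.
Set Implicit Arguments. Unset Strict Implicit. Unset Printing Implicit Defensive.
Import Order.TTheory GRing.Theory Num.Theory.
Local Open Scope classical_set_scope.
Local Open Scope ring_scope.

Definition pos_half {R : realType} : set R := `[0%R, +oo[%classic.

Definition int0oo {R : realType} (h : R -> R) : R :=
  Rintegral (@lebesgue_measure R) pos_half h.

Definition renyi_igf {R : realType} (h : R -> R) (a b : R) : R :=
  (1 - a)^-1 * (int0oo (fun x => h x `^ a)) `^ (b - 1).

Definition escort {R : realType} (f : R -> R) (r : R) : R -> R :=
  fun x => f x `^ r / int0oo (fun t => f t `^ r).

Definition is_pdf0 {R : realType} (f : R -> R) : Prop :=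
  [/\ measurable_fun pos_half f,
      (forall x, pos_half x -> 0 <= f x) &
      (\int[@lebesgue_measure R]_(x in pos_half) (f x)%:E = 1)%E].

(* Main.v *)
Require Import Defs.
From HB Require Import structures.
From mathcomp Require Import all_boot all_order all_algebra.
From mathcomp Require Import all_classical all_reals all_analysis.
From mathcomp Require Import ring lra.
Import Order.TTheory GRing.Theory Num.Theory.
Local Open Scope classical_set_scope.
Local Open Scope ring_scope.

Theorem proposition2p7 (R : realType) (f : R -> R) (r alpha beta : R) :
  is_pdf0 f ->
  0 < r -> r != 1 ->
  0 < alpha -> alpha != 1 -> 0 < beta -> alpha * r != 1 ->
  (@lebesgue_measure R).-integrable pos_half (fun x => (f x `^ r)%:E) ->
  (@lebesgue_measure R).-integrable pos_half (fun x => (f x `^ (alpha * r))%:E) ->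
  int0oo (fun x => f x `^ r) != 0 ->
  renyi_igf (escort f r) alpha beta =
    (1 - alpha * r) / ((1 - alpha) * (1 - r)) *
    (renyi_igf f (alpha * r) beta / renyi_igf f r (alpha * beta - alpha + 1)).
Proof.
move=> _ r0 r1 a0 a1 b0 ar1 _ iJ I0.
rewrite /renyi_igf /escort.
set I := int0oo (fun x => f x `^ r) in I0 *.
set J := int0oo (fun x => f x `^ (alpha * r)).
have Ige : 0 <= I by apply: Rintegral_ge0 => x _; exact: powR_ge0.
have Igt : 0 < I by rewrite lt_def I0.
have Jge : 0 <= J by apply: Rintegral_ge0 => x _; exact: powR_ge0.
have key : (fun x => (f x `^ r / I) `^ alpha) =
           (fun x => f x `^ (alpha * r) * I `^ (- alpha)).
  apply/funext => x.
  rewrite powRM ?powR_ge0 ?invr_ge0 //.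
  rewrite -powRrM (mulrC r alpha) -powR_inv1 // -powRrM mulN1r //.
have mP : measurable (pos_half : set R) by exact: measurable_itv.
have -> : int0oo (fun x => (f x `^ r / I) `^ alpha) = J * I `^ (- alpha).
  by rewrite /int0oo key RintegralZr.
rewrite powRM ?powR_ge0 // -powRrM.
have -> : alpha * beta - alpha + 1 - 1 = alpha * (beta - 1) by ring.
have -> : - alpha * (beta - 1) = - (alpha * (beta - 1)) by ring.
rewrite powRN.
have Ipos : 0 < I `^ (alpha * (beta - 1)) by apply: powR_gt0.
have h1 : 1 - alpha != 0 by rewrite subr_eq0 eq_sym.
have h2 : 1 - r != 0 by rewrite subr_eq0 eq_sym.
have h3 : 1 - alpha * r != 0 by rewrite subr_eq0 eq_sym.
have h4 : I `^ (alpha * (beta - 1)) != 0 by rewrite gt_eqF.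
move: (J `^ (beta - 1)) (I `^ (alpha * (beta - 1))) h4 => a b h4.
move: (1 - alpha) (1 - r) (1 - alpha * r) h1 h2 h3 => x y z h1 h2 h3.
by field; rewrite h1 h2 h3 h4.
Qed.
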